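(* Let $q$ be a prime power, $k\ge 1$ and $t\ge 0$ integers. Suppose there exists an $[n,k]_q$ MWS code with $n<q^t$. Then there exists an $[N,k+1]_q$ MWS code with $N<q^{t+k+1}$.
   Context: An $[n,k]_q$ code is a $k$-dimensional subspace of $\mathbb{F}_q^n$ (non-degenerate, i.e. no coordinate identically zero on the code, when $k\ge2$). It is MWS if the set of its non-zero Hamming weights has cardinality $\frac{q^k-1}{q-1}$. *)

(* Defs.v *)
From HB Require Import structures.
From mathcomp Require Import all_boot all_order all_algebra all_field.
Set Implicit Arguments. Unset Strict Implicit. Unset Printing Implicit Defensive.
Import GRing.Theory.
Local Open Scope ring_scope.

(* Linear codes over a finite field F (q = #|F|, automatically a prime power).
   An [n,k]_F code is represented by a generator matrix G : 'M[F]_(k,n) of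
   full row rank k; the code is the row space of G. *)

Section Codes.
Variable F : finFieldType.

Definition hwt n (c : 'rV[F]_n) : nat := #|[set i : 'I_n | c 0 i != 0]|.

Definition codeword k n (G : 'M[F]_(k, n)) (c : 'rV[F]_n) : bool := (c <= G)%MS.

Definition is_code k n (G : 'M[F]_(k, n)) : Prop :=
  \rank G = k /\
  ((2 <= k)%N -> forall i : 'I_n, exists c : 'rV[F]_n, codeword G c /\ c 0 i != 0).

Definition nz_weights k n (G : 'M[F]_(k, n)) : seq nat :=
  undup [seq hwt c | c <- enum [pred c : 'rV[F]_n | codeword G c && (c != 0)]].

Definition MWS k n (G : 'M[F]_(k, n)) : Prop :=
  is_code G /\ size (nz_weights G) = ((#|F| ^ k - 1) %/ (#|F| - 1))%N.
End Codes.

(* Main.v *)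
Require Import Defs.
From HB Require Import structures.
From mathcomp Require Import all_boot all_order all_algebra all_field.
From mathcomp Require Import zify.
Set Implicit Arguments. Unset Strict Implicit. Unset Printing Implicit Defensive.
Import GRing.Theory.
Local Open Scope ring_scope.

Section Aux.
Variable F : finFieldType.
Local Notation q := #|F|.

Lemma q_gt1 : (1 < q)%N.
Proof. exact: card_finNzRing_gt1. Qed.

Lemma mem_nzw m n (G : 'M[F]_(m, n)) w :
  (w \in nz_weights G) <-> exists x : 'rV_m, x *m G != 0 /\ hwt (x *m G) = w.
Proof.
rewrite /nz_weights mem_undup; split.
  case/mapP=> c; rewrite mem_enum /= /codeword => /andP[/submxP[D ->] nz] ->.
  by exists D.
case=> x [nz <-]; apply/mapP; exists (x *m G) => //.
rewrite mem_enum inE /= nz andbT; exact: submxMl.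
Qed.

Lemma hwtZ n (a : F) (c : 'rV[F]_n) : a != 0 -> hwt (a *: c) = hwt c.
Proof.
move=> a0; rewrite /hwt; apply: eq_card => i; rewrite !inE mxE.
by rewrite mulf_eq0 (negbTE a0).
Qed.

Lemma nzw_le m n (G : 'M[F]_(m, n)) :
  (q.-1 * size (nz_weights G) <= q ^ m - 1)%N.
Proof.
set W := nz_weights G.
set S := [set c : 'rV[F]_n | codeword G c && (c != 0)].
have h1 : (#|S| <= q ^ m - 1)%N.
  have sub : S \subset [set x *m G | x in [set~ (0 : 'rV[F]_m)]].
    apply/subsetP=> c; rewrite inE /codeword => /andP[/submxP[D ->] nz].
    apply/imsetP; exists D => //; rewrite !inE; apply: contra nz => /eqP ->.
    by rewrite mul0mx.
  apply: (leq_trans (subset_leq_card sub)); apply: (leq_trans (leq_imset_card _ _)).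
  by rewrite cardsC1 card_mx mul1n subn1.
have h2 : (q.-1 * size W <= #|S|)%N.
  have -> : #|S| = (\sum_(w <- W) #|[set c in S | hwt c == w]|)%N.
    rewrite -sum1_card.
    have e : forall c, c \in S -> (\sum_(w <- W) (hwt c == w : nat))%N = 1%N.
      move=> c cS.
      transitivity (\sum_(w <- W | hwt c == w) 1)%N.
        by rewrite [RHS]big_mkcond; apply: eq_bigr => w _; case: eqP.
      rewrite sum1_count (eq_count (a2 := pred1 (hwt c))); last by move=> w /=; rewrite eq_sym.
      rewrite count_uniq_mem ?undup_uniq //.
      have [x [xnz xw]] : exists x : 'rV_m, x *m G != 0 /\ hwt (x *m G) = hwt c.
        move: cS; rewrite inE /codeword => /andP[/submxP[D ->] nz]; by exists D.
      by apply/eqP; rewrite eqb1; apply/mem_nzw; exists x.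
    rewrite (eq_bigr (fun c => \sum_(w <- W) (hwt c == w : nat))%N); last by move=> c /e ->.
    rewrite exchange_big /=; apply: congr_big => // w _.
    rewrite -sum1_card big_mkcond [RHS]big_mkcond /=; apply: eq_bigr => c _.
    by rewrite !inE; case: (_ && _); case: (hwt c == w).
  rewrite mulnC -sum1_size big_distrl /= big_seq [X in (_ <= X)%N]big_seq.
  apply: leq_sum => w /mem_nzw [x [xnz xw]]; rewrite mul1n.
  set c0 := x *m G.
  have inj : {in [set~ (0:F)] &, injective (fun a : F => a *: c0)}.
    move=> a b _ _ /eqP; rewrite -subr_eq0 -scalerBl scaler_eq0 (negbTE xnz) orbF subr_eq0.
    by move/eqP.
  rewrite -[X in (X <= _)%N](cardsC1 (0:F)) -(card_in_imset inj); apply: subset_leq_card.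
  apply/subsetP=> c /imsetP[a]; rewrite !inE => anz ->.
  rewrite hwtZ // xw eqxx andbT /codeword scaler_eq0 (negbTE anz) (negbTE xnz) andbT.
  by apply: scalemx_sub; apply: submxMl.
exact: leq_trans h2 h1.
Qed.

Definition dot k (x : 'rV[F]_k) (v : 'cV[F]_k) : F := (x *m v) 0 0.

Definition mxcols k (cols : seq 'cV[F]_k) : 'M[F]_(k, size cols) :=
  \matrix_(i, j) (nth 0 cols j) i 0.

Lemma count_enumT (T : finType) (P : pred T) : count P (enum T) = #|[pred x | P x]|.
Proof.
by rewrite cardE /enum_mem size_filter count_filter; apply: eq_count => x; rewrite !inE andbT.
Qed.

Lemma card_nth (T : Type) (x0 : T) (s : seq T) (P : pred T) :
  #|[set j : 'I_(size s) | P (nth x0 s j)]| = count P s.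
Proof.
rewrite cardsE -count_enumT.
rewrite -(count_map (@nat_of_ord _) (fun j => P (nth x0 s j))) val_enum_ord.
by rewrite -count_map -/(mkseq _ _) mkseq_nth.
Qed.

Lemma hwt_cols k (cols : seq 'cV[F]_k) x :
  hwt (x *m mxcols cols) = count (fun v => dot x v != 0) cols.
Proof.
rewrite /hwt -(card_nth 0); apply: eq_card => j; rewrite !inE /dot !mxE.
by congr (_ != 0); apply: eq_bigr => i _; rewrite !mxE.
Qed.

Definition colsG k n (G : 'M[F]_(k, n)) : seq 'cV[F]_k :=
  [seq v <- [seq col j G | j <- enum 'I_n] | v != 0].

Lemma size_colsG k n (G : 'M[F]_(k, n)) : (size (colsG G) <= n)%N.
Proof. by rewrite size_filter (leq_trans (count_size _ _)) // size_map size_enum_ord. Qed.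

Lemma dot0 k (x : 'rV[F]_k) : dot x 0 = 0.
Proof. by rewrite /dot mulmx0 mxE. Qed.

Lemma hwt_colsG k n (G : 'M[F]_(k, n)) x :
  hwt (x *m G) = count (fun v => dot x v != 0) (colsG G).
Proof.
rewrite /colsG count_filter (eq_count (a2 := fun v => dot x v != 0)); last first.
  by move=> v /=; case: (v =P 0) => [->|/eqP nz]; rewrite ?dot0 ?eqxx ?nz ?andbT.
rewrite count_map.
rewrite count_enumT /hwt cardsE; apply: eq_card => j; rewrite unfold_in inE /= /dot !mxE.
by congr (_ != 0); apply: eq_bigr => i _; rewrite !mxE.
Qed.

Lemma dot_rc k (a : 'rV[F]_1) (y : 'rV[F]_k) (b : 'cV[F]_1) (v : 'cV[F]_k) :
  dot (row_mx a y) (col_mx b v) = a 0 0 * b 0 0 + dot y v.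
Proof. by rewrite /dot mul_row_col mxE [(a *m b) 0 0]mxE big_ord1. Qed.

End Aux.

Section Gad.
Variable F : finFieldType.
Local Notation q := #|F|.

Definition nzs : seq F := [seq a <- enum F | a != 0].
Definition hh (a : F) : nat := index a nzs.
Definition hseq : seq F := flatten [seq nseq (hh a) a | a <- enum F].
Fixpoint gad k : seq 'cV[F]_k :=
  if k is k'.+1 then
    ([seq col_mx (a%:M) v | a <- hseq, v <- enum 'cV[F]_k'] ++
     [seq col_mx 0 u | u <- gad k'] : seq 'cV[F]_(1 + k'))
  else [::].

Lemma size_nzs : size nzs = q.-1.
Proof.
rewrite size_filter count_enumT -(cardC1 (0:F)); apply: eq_card => a.
by rewrite !inE.
Qed.

Lemma mem_nzs a : (a \in nzs) = (a != 0).
Proof. by rewrite mem_filter mem_enum andbT. Qed.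

Lemma hh0 : hh 0 = q.-1.
Proof. by rewrite /hh memNindex ?size_nzs // mem_nzs eqxx. Qed.

Lemma hh_lt a : a != 0 -> (hh a < q.-1)%N.
Proof. by move=> a0; rewrite /hh -size_nzs index_mem mem_nzs. Qed.

Lemma hh_le a : (hh a <= q.-1)%N.
Proof. by rewrite /hh -size_nzs index_size. Qed.

Lemma hh_inj : injective hh.
Proof.
move=> a b; rewrite /hh => e.
case: (boolP (a \in nzs)) => ain; case: (boolP (b \in nzs)) => bin.
- by rewrite -(nth_index 0 ain) -(nth_index 0 bin) e.
- by move: e; rewrite (memNindex bin) => e; move: (index_mem a nzs); rewrite e ltnn ain.
- by move: e; rewrite (memNindex ain) => e; move: (index_mem b nzs); rewrite -e ltnn bin.
- by move: ain bin; rewrite !mem_nzs !negbK => /eqP -> /eqP ->.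
Qed.

Lemma count_hseq (P : pred F) : count P hseq = (\sum_(a : F) P a * hh a)%N.
Proof.
rewrite /hseq count_flatten sumnE !big_map.
by apply: eq_bigr => a _; rewrite count_nseq.
Qed.

Lemma size_hseq : (size hseq <= q * q.-1)%N.
Proof.
rewrite -count_predT count_hseq.
apply: (@leq_trans (\sum_(a : F) q.-1)%N).
  by apply: leq_sum => a _; rewrite mul1n hh_le.
by rewrite sum_nat_const.
Qed.

Lemma fiber_le k (y : 'rV[F]_k) (d d' : F) : y != 0 ->
  (count (fun v => dot y v == d) (enum 'cV[F]_k) <=
   count (fun v => dot y v == d') (enum 'cV[F]_k))%N.
Proof.
move=> ynz.
have [i yi] : exists i, y 0 i != 0.
  case: (pickP (fun i => y 0 i != 0)) => [i yi|H]; first by exists i.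
  case/negP: ynz; apply/eqP/rowP => i; rewrite mxE; exact/eqP/negbFE/H.
set v0 : 'cV[F]_k := (y 0 i)^-1 *: delta_mx i 0.
have dv0 : dot y v0 = 1.
  by rewrite /dot -scalemxAr mxE -colE mxE mulVf.
have dlin : forall v, dot y (v + (d' - d) *: v0) = dot y v + (d' - d).
  move=> v; rewrite /dot mulmxDr -scalemxAr mxE [in X in _ + X]mxE.
  by rewrite -/(dot y v0) dv0 mulr1.
rewrite !count_enumT.
have finj : injective (fun v : 'cV[F]_k => v + (d' - d) *: v0) by apply: addIr.
rewrite -(card_image finj); apply: subset_leq_card.
apply/subsetP=> _ /imageP [v vA ->]; rewrite inE /= dlin.
by move: vA; rewrite inE /= => /eqP ->; rewrite addrC subrK.
Qed.

Lemma fiber_eq k (y : 'rV[F]_k) (d d' : F) : y != 0 ->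
  count (fun v => dot y v == d) (enum 'cV[F]_k) =
  count (fun v => dot y v == d') (enum 'cV[F]_k).
Proof. by move=> ynz; apply/eqP; rewrite eqn_leq !fiber_le. Qed.

Lemma count_gadS k (a : 'rV[F]_1) (y : 'rV[F]_k) c :
  count (fun v => dot (row_mx a y) v == c) (gad k.+1) =
  ((\sum_(b <- hseq) count (fun v => (a ord0 ord0 * b + dot y v == c)%R) (enum 'cV[F]_k))
   + count (fun v => dot y v == c) (gad k))%N.
Proof.
rewrite /= count_cat; congr (_ + _)%N.
  elim: hseq => [|b s IH]; first by rewrite big_nil.
  rewrite /= count_cat IH big_cons count_map; congr (_ + _)%N.
  by apply: eq_count => v /=; rewrite dot_rc mxE eqxx mulr1n.
rewrite count_map; apply: eq_count => u /=.
by rewrite dot_rc mxE mulr0 add0r.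
Qed.

Lemma count_const (T : Type) (B : bool) (l : seq T) :
  count (fun _ => B) l = (B * size l)%N.
Proof. by elim: l => [|x l IH] /=; rewrite ?muln0 // IH mulnS. Qed.

Lemma sum_count (T : Type) (P : pred T) (l : seq T) :
  (\sum_(b <- l) (P b : nat))%N = count P l.
Proof. by elim: l => [|x l IH]; rewrite ?big_nil ?big_cons ?IH. Qed.

Lemma gad_inj k (x : 'rV[F]_k) :
  x != 0 -> injective (fun c => count (fun v => dot x v == c) (gad k)).
Proof.
elim: k x => [|k IH] x xnz; first by case/negP: xnz; apply/eqP/rowP => -[].
have [a [y xe]] : exists (a : 'rV[F]_1) (y : 'rV[F]_k), x = row_mx a y.
  by exists (lsubmx (x : 'M_(1, 1 + k))), (rsubmx (x : 'M_(1, 1 + k))); rewrite hsubmxK.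
rewrite xe in xnz *.
move=> c1 c2 /=; rewrite !count_gadS.
set s := a ord0 ord0.
case: (boolP (y == 0)) => [/eqP y0 | ynz]; last first.
  have K : forall c, (\sum_(b <- hseq) count (fun v => (s * b + dot y v == c)%R) (enum 'cV[F]_k))%N
       = (\sum_(b <- hseq) count (fun v => (dot y v == 0)%R) (enum 'cV[F]_k))%N.
    move=> c; apply: eq_bigr => b _.
    rewrite (eq_count (a2 := fun v => dot y v == c - s * b)); last first.
      by move=> v /=; rewrite addrC eq_sym -subr_eq eq_sym.
    exact: fiber_eq.
  by rewrite !K => /addnI; apply: IH.
subst y.
have anz : a != 0.
  by apply: contra xnz => /eqP ->; rewrite row_mx0.
have snz : s != 0.
  apply: contra anz => /eqP s0; apply/eqP/rowP => j; rewrite ord1 mxE -/s s0.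
  by [].
have dot0l : forall v : 'cV[F]_k, dot 0 v = 0 by move=> v; rewrite /dot mul0mx mxE.
have E : forall c, ((\sum_(b <- hseq) count (fun v => (s * b + dot 0 v == c)%R) (enum 'cV[F]_k))
     + count (fun v => dot 0 v == c) (gad k) =
     hh (c / s)%R * size (enum 'cV[F]_k) + ((c == 0)%R : nat) * size (gad k))%N.
  move=> c; congr (_ + _)%N; last first.
    by rewrite (eq_count (a2 := fun _ => c == 0)) ?count_const // => v /=; rewrite dot0l eq_sym.
  rewrite (eq_bigr (fun b => (((s * b == c)%R : nat) * size (enum 'cV[F]_k))%N)); last first.
    move=> b _; rewrite (eq_count (a2 := fun _ => s * b == c)) ?count_const //.
    by move=> v /=; rewrite dot0l addr0.
  rewrite -big_distrl /= sum_count count_hseq; congr (_ * _)%N.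
  rewrite (bigD1 (c / s)) //= big1 ?addn0.
    by rewrite mulrC divfK // eqxx mul1n.
  move=> b /negbTE bne; suff -> : (s * b == c) = false by rewrite mul0n.
  apply: negbTE; apply: contraFN bne => /eqP <-.
  by rewrite [s * b]mulrC mulfK.
rewrite !E.
have Npos : (0 < size (enum 'cV[F]_k))%N.
  by rewrite -cardE card_mx expn_gt0 (ltn_trans _ (q_gt1 F)).
have lt : forall c, c != 0 -> (hh (c / s)%R * size (enum 'cV[F]_k) < q.-1 * size (enum 'cV[F]_k))%N.
  move=> c cnz; rewrite ltn_pmul2r // hh_lt //.
  by rewrite mulf_neq0 // invr_neq0.
case: (c1 =P 0) => [-> | /eqP c1nz]; case: (c2 =P 0) => [-> | /eqP c2nz] //=.
- rewrite mul0r hh0 mul1n mul0n addn0 => e; have := lt _ c2nz.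
  by rewrite -e ltnNge leq_addr.
- rewrite mul0r hh0 mul1n mul0n addn0 => e; have := lt _ c1nz.
  by rewrite e ltnNge leq_addr.
rewrite !mul0n !addn0 => /eqP.
rewrite eqn_pmul2r // => /eqP /hh_inj.
by move/(mulIf (invr_neq0 snz)).
Qed.

Lemma size_gadS k :
  size (gad k.+1) = (size hseq * q ^ k + size (gad k))%N.
Proof.
by rewrite /= size_cat size_allpairs size_map -enumT -cardT card_mx muln1 size_map.
Qed.

Lemma size_gad k : (size (gad k) + q <= q ^ k.+1)%N.
Proof.
elim: k => [|k IH]; first by rewrite /= expn1.
rewrite size_gadS.
have h1 := size_hseq.
have q1 : (0 < q)%N by apply: ltn_trans (q_gt1 F).
have -> : (q ^ k.+2 = q.-1 * q ^ k.+1 + q ^ k.+1)%N.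
  by rewrite -{2}(mul1n (q ^ k.+1)%N) -mulnDl addn1 prednK.
rewrite -addnA; apply: leq_add; last exact: IH.
rewrite expnS mulnA; apply: leq_mul => //.
by rewrite mulnC.
Qed.

Lemma gad_pos k : (0 < size (gad k.+1))%N.
Proof.
rewrite size_gadS; apply: (@leq_trans (size hseq * q ^ k)); last exact: leq_addr.
rewrite muln_gt0 expn_gt0 (ltn_trans _ (q_gt1 F)) // andbT.
rewrite -count_predT count_hseq (bigD1 0) //= mul1n hh0.
apply: leq_trans (leq_addr _ _).
by rewrite -ltnS prednK ?(q_gt1 F) // (ltn_trans _ (q_gt1 F)).
Qed.

End Gad.

Section Main.
Variable F : finFieldType.
Local Notation q := #|F|.

Lemma count_flatten_nseq (T : Type) (P : pred T) (s : seq T) m :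
  count P (flatten (nseq m s)) = (m * count P s)%N.
Proof. by elim: m => //= m IH; rewrite count_cat IH mulSn. Qed.

Lemma mem_flatten_nseq (T : eqType) (s : seq T) m x :
  x \in flatten (nseq m s) -> x \in s.
Proof. by elim: m => //= m IH; rewrite mem_cat => /orP[] // /IH. Qed.

Lemma size_flatten_nseq (T : Type) (s : seq T) m :
  size (flatten (nseq m s)) = (m * size s)%N.
Proof. by elim: m => //= m IH; rewrite size_cat IH mulSn. Qed.

Definition newcols k n (G : 'M[F]_(k, n)) : seq 'cV[F]_(1 + k) :=
  flatten (nseq (size (gad F k)).+1 [seq col_mx 0 v | v <- colsG G]) ++
  [seq col_mx 1 v | v <- gad F k].

Definition newG k n (G : 'M[F]_(k, n)) := mxcols (newcols G).

Lemma hwt0 n : hwt (0 : 'rV[F]_n) = 0%N.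
Proof.
rewrite /hwt; apply/eqP; rewrite cards_eq0; apply/eqP/setP => i.
by rewrite !inE mxE eqxx.
Qed.

Lemma hwt_eq0 n (c : 'rV[F]_n) : hwt c = 0%N -> c = 0.
Proof.
move/eqP; rewrite cards_eq0 => /eqP/setP H; apply/rowP => i.
by move: (H i); rewrite !inE mxE => /negbFE/eqP.
Qed.

Lemma hwt_gt0 n (c : 'rV[F]_n) : c != 0 -> (0 < hwt c)%N.
Proof. by move=> cnz; rewrite lt0n; apply: contra cnz => /eqP/hwt_eq0 ->. Qed.

Lemma hwt_new k n (G : 'M[F]_(k, n)) (a : 'rV[F]_1) (y : 'rV[F]_k) :
  hwt (row_mx a y *m newG G) =
  ((size (gad F k)).+1 * hwt (y *m G) +
   count (fun v => (a ord0 ord0 + dot y v != 0)%R) (gad F k))%N.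
Proof.
rewrite /newG hwt_cols count_cat count_flatten_nseq !count_map hwt_colsG.
congr (_ * _ + _)%N; apply: eq_count => v /=; rewrite dot_rc mxE.
  by rewrite mulr0 add0r.
by rewrite eqxx mulr1n mulr1.
Qed.

Lemma gw_inj k (y : 'rV[F]_k) : y != 0 ->
  injective (fun mu : F => count (fun v => mu + dot y v != 0) (gad F k)).
Proof.
move=> ynz m1 m2 /= e.
have E : forall mu, count (fun v => mu + dot y v != 0) (gad F k) =
   (size (gad F k) - count (fun v => (dot y v == - mu)%R) (gad F k))%N.
  move=> mu; rewrite -(count_predC (fun v => dot y v == - mu) (gad F k)) addKn.
  by apply: eq_count => v /=; rewrite addrC addr_eq0.
move: e; rewrite !E => e.
have e2 := congr1 (fun z => size (gad F k) - z)%N e.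
rewrite /= !subKn ?count_size // in e2.
by apply: oppr_inj; apply: (gad_inj ynz).
Qed.

Lemma geomS m : ((q ^ m.+1 - 1) %/ (q - 1) = q * ((q ^ m - 1) %/ (q - 1)) + 1)%N.
Proof.
have q1 : (0 < q.-1)%N by rewrite -ltnS prednK ?(q_gt1 F) // (ltn_trans _ (q_gt1 F)).
rewrite !subn1 !predn_exp !mulKn //.
by rewrite big_ord_recl expn0 addnC big_distrr /=; congr (_ + _)%N; apply: eq_bigr => i _; rewrite expnS.
Qed.

Lemma step k n t (G : 'M[F]_(k.+1, n)) : (n < q ^ t)%N -> MWS G ->
  (size (newcols G) < q ^ (t + k.+1 + 1))%N /\ MWS (newG G).
Proof.
move=> nt [[rkG _] szW].
set R := gad F k.+1.
set A := (size R).+1.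
have q2 := q_gt1 F.
have Rpos : (0 < size R)%N by apply: gad_pos.
have freeG : row_free G by rewrite /row_free rkG.
split.
  have e : size (newcols G) = (A * size (colsG G) + size R)%N.
    rewrite /newcols size_cat size_map size_flatten_nseq size_map.
    by [].
  rewrite e.
  have h1 := size_colsG G.
  have h2 := size_gad F k.+1.
  rewrite -/R in h2.
  have -> : (q ^ (t + k.+1 + 1) = q ^ t * q ^ k.+2)%N by rewrite -expnD; congr (_ ^ _)%N; lia.
  move: h1 h2 nt; rewrite /A.
  set X := size (colsG G); set Rz := size R; set Q := (q ^ t)%N; set P := (q ^ k.+2)%N.
  move=> h1 h2 nt; nia.
have dot0x : forall m (v : 'cV[F]_m), dot 0 v = 0 by move=> m v; rewrite /dot mul0mx mxE.
have q1 : (0 < q.-1)%N by rewrite -ltnS prednK ?(q_gt1 F) // (ltn_trans _ (q_gt1 F)).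
have decomp : forall v : 'rV[F]_(1 + k.+1), exists (a : 'rV[F]_1) (y : 'rV[F]_k.+1), v = row_mx a y.
  by move=> v; exists (lsubmx v), (rsubmx v); rewrite hsubmxK.
split; first split.
- have : row_free (newG G).
    apply: inj_row_free => v vG.
    have [a [y ve]] := decomp v; subst v.
    move: (hwt_new G a y); rewrite vG hwt0 => /esym/eqP; rewrite addn_eq0 muln_eq0 /=.
    case/andP=> /eqP hy /eqP hc.
    have y0 : y = 0 by apply/eqP; rewrite -(mulmx_free_eq0 _ freeG); apply/eqP/hwt_eq0.
    subst y.
    move: hc; rewrite (eq_count (a2 := fun _ => a ord0 ord0 != 0)); last first.
      by move=> v /=; rewrite dot0x addr0.
    rewrite count_const -/R => /eqP; rewrite muln_eq0 (negbTE (lt0n_neq0 Rpos)) orbF eqb0 negbK.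
    move=> /eqP a0; have -> : a = 0 by apply/rowP => j; rewrite ord1 mxE a0.
    by rewrite row_mx0.
  by rewrite /row_free => /eqP.
- move=> _ i.
  set v := nth 0 (newcols G) i.
  have vin : v \in newcols G by rewrite mem_nth.
  suff [x xv] : exists x : 'rV[F]_(1 + k.+1), dot x v != 0.
    exists (x *m newG G); split; first exact: submxMl.
    rewrite /newG /dot !mxE; move: xv; rewrite /dot mxE.
    by congr (_ != 0); apply: eq_bigr => j _; rewrite !mxE.
  move: vin; rewrite mem_cat => /orP[/mem_flatten_nseq/mapP[u uin ->] | /mapP[u uin ->]].
    move: uin; rewrite mem_filter => /andP[unz _].
    have [j uj] : exists j, u j 0 != 0.
      case: (pickP (fun j => u j 0 != 0)) => [j uj|H]; first by exists j.
      case/negP: unz; apply/eqP/colP => j; rewrite mxE; exact/eqP/negbFE/H.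
    exists (row_mx 0 (delta_mx 0 j)); rewrite dot_rc mxE mul0r add0r /dot -rowE mxE.
    by [].
  exists (row_mx 1 0); rewrite dot_rc dot0x addr0 !mxE eqxx mulr1n mulr1.
  exact: oner_neq0.
have divE : forall m, (q.-1 * ((q ^ m).-1 %/ q.-1))%N = (q ^ m).-1.
  by move=> m; rewrite predn_exp mulKn.
apply/eqP; rewrite eqn_leq; apply/andP; split.
  rewrite -(leq_pmul2l q1); apply: leq_trans (nzw_le (newG G)) _.
  by rewrite !subn1 divE.
have -> : ((q ^ (1 + k.+1) - 1) %/ (q - 1) = (q ^ k.+2 - 1) %/ (q - 1))%N by [].
rewrite geomS -szW.
set W := nz_weights G.
set W' := nz_weights (newG G).
pose xw w := odflt 0 [pick x : 'rV[F]_k.+1 | (x *m G != 0) && (hwt (x *m G) == w)].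
have xwP : forall w, w \in W -> xw w *m G != 0 /\ hwt (xw w *m G) = w.
  move=> w /mem_nzw [x [xnz xe]]; rewrite /xw; case: pickP => [x' /andP[nz /eqP e] | H] //=.
  by move: (H x); rewrite xnz xe eqxx.
pose g w mu := count (fun v => mu + dot (xw w) v != 0) R.
have gle : forall w mu, (g w mu < A)%N by move=> w mu; rewrite ltnS count_size.
pose L := [seq (A * w + g w mu)%N | w <- W, mu <- enum F] ++ [:: size R].
have wpos : forall w, w \in W -> (0 < w)%N.
  by move=> w /mem_nzw [x [xnz <-]]; apply: hwt_gt0.
have Lsub : {subset L <= W'}.
  move=> z; rewrite mem_cat => /orP[/allpairsP [[w mu] [/= wW _ ->]] | ].
    apply/mem_nzw; exists (row_mx mu%:M (xw w)).
    have e : hwt (row_mx mu%:M (xw w) *m newG G) = (A * w + g w mu)%N.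
      rewrite hwt_new (xwP _ wW).2; congr (_ + _)%N; apply: eq_count => v /=.
      by rewrite mxE eqxx mulr1n.
    split => //; apply: contraTneq (wpos _ wW) => e0.
    by move: e; rewrite e0 hwt0 => /esym/eqP; rewrite addn_eq0 muln_eq0 /= => /andP[/eqP -> _].
  rewrite inE => /eqP ->; apply/mem_nzw; exists (row_mx 1 0).
  have e : hwt (row_mx 1 0 *m newG G) = size R.
    rewrite hwt_new mul0mx hwt0 muln0 add0n -/R -[RHS]count_predT; apply: eq_count => v /=.
    by rewrite dot0x addr0 mxE eqxx mulr1n oner_neq0.
  split => //; apply: contraTneq Rpos => e0.
  by move: e; rewrite e0 hwt0 => <-.
have Luniq : uniq L.
  rewrite cat_uniq /= andbT; apply/andP; split.
    apply: allpairs_uniq; [exact: undup_uniq | exact: enum_uniq |].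
    move=> [w1 m1] [w2 m2] /allpairsP[[w1' m1'] [/= w1W _ [-> ->]]].
    move=> /allpairsP[[w2' m2'] [/= w2W _ [-> ->]]] /= e.
    have ew : w1' = w2'.
      have := congr1 (fun z => z %/ A)%N e; rewrite /= ![(A * _)%N]mulnC.
      by rewrite !divnMDl // !divn_small ?gle // !addn0.
    subst w2'; move/addnI: e => e.
    have xnz : xw w1' != 0.
      by apply: (contraNneq _ (xwP _ w1W).1) => ->; rewrite mul0mx.
    by rewrite (gw_inj xnz e).
  rewrite orbF; apply/negP => /allpairsP[[w mu] [/= wW _ e]].
  have := wpos _ wW; move: e; rewrite /A; nia.
have := uniq_leq_size Luniq Lsub.
rewrite /L size_cat size_allpairs -cardE /= mulnC; apply.
Qed.

End Main.

Theorem mainTheorem15 (F : finFieldType) (k t : nat) :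
  (1 <= k)%N ->
  (exists (n : nat) (G : 'M[F]_(k, n)), (n < #|F| ^ t)%N /\ MWS G) ->
  exists (N : nat) (G' : 'M[F]_(k.+1, N)), (N < #|F| ^ (t + k + 1))%N /\ MWS G'.
Proof.
case: k => [//|k] _ [n [G [nt mws]]].
exists (size (newcols G)), (newG G).
exact: step nt mws.
Qed.
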